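(* Let $H$ be a complete graph and let $\mathbf{E}=(E_0,E_1,E_2)$ be an ordered partition of $E(H)$. Let $M$ be a matching in $H$ with $M\subset E_0$ and $|M|<\lfloor\frac12|V(H)|\rfloor$, and let $X=V(H)-V(M)$. Then (1) if $E(H[X])\cap(E_0\cup E_1)\ne\emptyset$, then $H$ contains a good matching for $\mathbf{E}$ of order $|M|+1$; and (2) if $|E_H(V(M),X)\cap E_0|>|E_H(V(M),X)\cap E_2|$, then $H$ contains a good matching for $\mathbf{E}$ of order $|M|+1$.
   Context: An ordered partition $(E_0,E_1,E_2)$ of a set is a triple of pairwise disjoint (possibly empty) sets with that union. A matching $M$ is a good matching for $\mathbf{E}$ if $M\cap E_2=\emptyset$ and $|M\cap E_1|\le1$; the order of a matching is its number of edges. $V(M)$ is the set of endpoints of edges of $M$; for disjoint $A,B\subset V(H)$, $E_H(A,B)$ is the set of edges of $H$ with one end in $A$ and the other in $B$. *)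

(* Defs.v *)
From mathcomp Require Import all_boot.
Set Implicit Arguments. Unset Strict Implicit. Unset Printing Implicit Defensive.

(* The complete graph H on a finite vertex type T: its edges are all
   2-element subsets of T. *)
Definition Kedges (T : finType) : {set {set T}} := [set e : {set T} | #|e| == 2].

Definition is_matching (T : finType) (M : {set {set T}}) : bool :=
  (M \subset Kedges T) &&
  [forall e1 in M, forall e2 in M, (e1 != e2) ==> [disjoint e1 & e2]].

Definition ordered_partition (T : finType) (E0 E1 E2 : {set {set T}}) : Prop :=
  [/\ E0 :|: E1 :|: E2 = Kedges T,
      [disjoint E0 & E1], [disjoint E0 & E2] & [disjoint E1 & E2]].

Definition good_matching (T : finType) (E1 E2 M : {set {set T}}) : bool :=
  [&& is_matching M, M :&: E2 == set0 & #|M :&: E1| <= 1].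

Definition Vm (T : finType) (M : {set {set T}}) : {set T} := cover M.

Definition induced_edges (T : finType) (X : {set T}) : {set {set T}} :=
  [set e in Kedges T | e \subset X].

Definition cross_edges (T : finType) (A B : {set T}) : {set {set T}} :=
  [set e in Kedges T | (#|e :&: A| == 1) && (#|e :&: B| == 1)].

(* Main.v *)
Require Import Defs.
From mathcomp Require Import all_boot zify.
From Stdlib Require Import Classical.
Set Implicit Arguments. Unset Strict Implicit. Unset Printing Implicit Defensive.

Lemma disjP (T : finType) (A B : {set T}) : reflect (forall x, x \in A -> x \notin B) [disjoint A & B].
Proof.
rewrite disjoint_subset; apply: (iffP subsetP) => H x Hx.
  by have := H x Hx; rewrite inE.
by rewrite inE; apply: H.
Qed.

Section S.
Variable T : finType.

Lemma disjPs (A B : {set {set T}}) : [disjoint A & B] -> forall x, x \in A -> x \notin B.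
Proof. by move=> /disjP. Qed.

Lemma matchP (M : {set {set T}}) : is_matching M ->
  (forall e, e \in M -> #|e| = 2) /\
  (forall e1 e2, e1 \in M -> e2 \in M -> e1 != e2 -> forall x, x \in e1 -> x \notin e2).
Proof.
case/andP => /subsetP HK /forallP H; split.
  by move=> e /HK; rewrite inE => /eqP.
move=> e1 e2 H1 H2 Hne; have := H e1.
rewrite H1 /= => /forallP /(_ e2) /implyP /(_ H2) /implyP /(_ Hne) /disjP; exact.
Qed.

Lemma matchI (M : {set {set T}}) :
  (forall e, e \in M -> #|e| = 2) ->
  (forall e1 e2, e1 \in M -> e2 \in M -> e1 != e2 -> forall x, x \in e1 -> x \notin e2) ->
  is_matching M.
Proof.
move=> H1 H2; apply/andP; split.
  by apply/subsetP => e He; rewrite inE H1.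
apply/forallP => e1; apply/implyP => He1; apply/forallP => e2; apply/implyP => He2.
apply/implyP => Hne; apply/disjP; exact: H2.
Qed.

Lemma in_cover (M : {set {set T}}) e x : e \in M -> x \in e -> x \in Vm M.
Proof. move=> He Hx; apply/bigcupP; by exists e. Qed.

End S.

Section S.
Variable T : finType.

Lemma extend1 (E0 E1 E2 M : {set {set T}}) (e : {set T}) :
  ordered_partition E0 E1 E2 -> is_matching M -> M \subset E0 ->
  #|e| = 2 -> e \subset ~: Vm M -> e \in E0 :|: E1 ->
  exists M' : {set {set T}}, good_matching E1 E2 M' /\ #|M'| = #|M|.+1.
Proof.
case=> _ D01 D02 D12 HM /subsetP ME0 He2 /subsetP HeX HeE.
have [Mc Md] := matchP HM.
have eM : e \notin M.
  apply/negP => eM; have /set0Pn [x xe] : e != set0.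
    by apply/negP => /eqP E; rewrite E cards0 in He2.
  by have := HeX x xe; rewrite inE (in_cover eM xe).
exists (e |: M); split; last by rewrite cardsU1 eM.
apply/and3P; split.
- apply: matchI.
    by move=> f; rewrite in_setU1 => /orP [/eqP -> //|]; apply: Mc.
  have key : forall f, f \in M -> forall x, x \in e -> x \notin f.
    move=> f fM x xe; apply/negP => xf.
    by have := HeX x xe; rewrite inE (in_cover fM xf).
  move=> f1 f2; rewrite !in_setU1 => /orP [/eqP -> | f1M] /orP [/eqP -> | f2M] Hne.
  + by rewrite eqxx in Hne.
  + by apply: key.
  + move=> x xf1; apply/negP => xe; by have := key _ f1M x xe; rewrite xf1.
  + by apply: Md.
- apply/eqP/setP => f; rewrite !inE; apply/negP => /andP [/orP [/eqP -> | fM] fE2].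
    case/setUP: HeE => He.
      by have := disjPs D02 He; rewrite fE2.
    by have := disjPs D12 He; rewrite fE2.
  by have := disjPs D02 (ME0 _ fM); rewrite fE2.
- rewrite -(cards1 e); apply: subset_leq_card.
  apply/subsetP => f; rewrite !inE => /andP [/orP [//|fM] fE1].
  by have := disjPs D01 (ME0 _ fM); rewrite fE1.
Qed.
End S.

Section S.
Variable T : finType.

Lemma extend2 (E0 E1 E2 M : {set {set T}}) (u v x y : T) :
  ordered_partition E0 E1 E2 -> is_matching M -> M \subset E0 ->
  [set u; v] \in M -> u != v -> x \notin Vm M -> y \notin Vm M -> x != y ->
  [set u; x] \in E0 -> [set v; y] \notin E2 ->
  exists M' : {set {set T}}, good_matching E1 E2 M' /\ #|M'| = #|M|.+1.
Proof.
case=> _ D01 D02 D12 HM /subsetP ME0 mM uv xV yV xy e1E0 e2E2.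
have [Mc Md] := matchP HM.
set m := [set u; v] in mM.
have uV : u \in Vm M by apply: (in_cover mM); rewrite !inE eqxx.
have vV : v \in Vm M by apply: (in_cover mM); rewrite !inE eqxx orbT.
have ux : u != x by apply/eqP => E; rewrite -E uV in xV.
have uy : u != y by apply/eqP => E; rewrite -E uV in yV.
have vy : v != y by apply/eqP => E; rewrite -E vV in yV.
have vx : v != x by apply/eqP => E; rewrite -E vV in xV.
set e1 := [set u; x]; set e2 := [set v; y].
set M0 := M :\ m.
have notM : forall f, f \in M -> forall z, z \in f -> z \notin Vm M -> False.
  by move=> f fM z zf; rewrite (in_cover fM zf).
have e1M0 : e1 \notin M0.
  apply/negP => /setD1P [_ H]; apply: (notM _ H x) => //; by rewrite !inE eqxx orbT.
have e2M0 : e2 \notin M0.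
  apply/negP => /setD1P [_ H]; apply: (notM _ H y) => //; by rewrite !inE eqxx orbT.
have e12 : e1 != e2.
  apply/negP => /eqP E; have : u \in e2 by rewrite -E !inE eqxx.
  by rewrite !inE (negbTE uv) (negbTE uy).
have key : forall f, f \in M0 -> forall z, z \in e1 :|: e2 -> z \notin f.
  move=> f /setD1P [fm fM] z; have mf : m != f by rewrite eq_sym. rewrite !inE -!orbA.
  case/or4P => /eqP ->; apply/negP => zf.
  - by have := Md _ _ mM fM mf u; rewrite !inE eqxx zf => /(_ isT).
  - exact: (notM _ fM x zf xV).
  - by have := Md _ _ mM fM mf v; rewrite !inE eqxx orbT zf => /(_ isT).
  - exact: (notM _ fM y zf yV).
exists (e1 |: (e2 |: M0)); split; last first.
  rewrite cardsU1 cardsU1 in_setU1 (negbTE e12) e1M0 e2M0 /= (cardsD1 m M) mM.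
  by [].
apply/and3P; split.
- apply: matchI.
    move=> f; rewrite !in_setU1 => /or3P [/eqP -> | /eqP -> | /setD1P [_ fM]].
    + by rewrite cards2 ux.
    + by rewrite cards2 vy.
    + by apply: Mc.
  have k1 : forall f, f \in M0 -> forall z, z \in e1 -> z \notin f.
    by move=> f fM z ze; apply: (key f fM z); rewrite inE ze.
  have k2 : forall f, f \in M0 -> forall z, z \in e2 -> z \notin f.
    by move=> f fM z ze; apply: (key f fM z); rewrite inE ze orbT.
  have k12 : forall z, z \in e1 -> z \notin e2.
    move=> z /set2P [] zE; rewrite zE !inE.
      by rewrite (negbTE uv) (negbTE uy).
    by rewrite eq_sym (negbTE vx) (negbTE xy).
  have sw : forall A B : {set T}, (forall z, z \in A -> z \notin B) -> forall z, z \in B -> z \notin A.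
    by move=> A B H z zB; apply/negP => zA; have := H z zA; rewrite zB.
  have M0M : forall f, f \in M0 -> f \in M by move=> f /setD1P [].
  move=> f1 f2; rewrite !in_setU1.
  move=> /or3P [/eqP -> | /eqP -> | f1M] /or3P [/eqP -> | /eqP -> | f2M] Hne.
  + by rewrite eqxx in Hne.
  + exact: k12.
  + exact: k1 _ f2M.
  + exact: sw k12.
  + by rewrite eqxx in Hne.
  + exact: k2 _ f2M.
  + exact: sw (k1 _ f1M).
  + exact: sw (k2 _ f1M).
  + exact: Md (M0M _ f1M) (M0M _ f2M) Hne.
- apply/eqP/setP => f; rewrite !inE; apply/negP => /andP [].
  move=> /or3P [/eqP -> | /eqP -> | /andP [_ fM]] fE2.
  + by have := disjPs D02 e1E0; rewrite fE2.
  + by rewrite fE2 in e2E2.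
  + by have := disjPs D02 (ME0 _ fM); rewrite fE2.
- rewrite -(cards1 e2); apply: subset_leq_card.
  apply/subsetP => f; rewrite !inE => /andP [/or3P [/eqP -> | -> // | /andP [_ fM]] fE1].
    by have := disjPs D01 e1E0; rewrite fE1.
  by have := disjPs D01 (ME0 _ fM); rewrite fE1.
Qed.
End S.

Section S.
Variable T : finType.

Lemma card_cond (I : finType) (A : {set I}) (P : pred I) :
  #|[set e in A | P e]| = \sum_(e in A) (if P e then 1 else 0).
Proof.
rewrite -sum1_card -big_mkcondr /=; apply: eq_bigl => e; by rewrite inE.
Qed.

Lemma cnt (V : {set T}) (E : {set {set T}}) :
  #|cross_edges V (~: V) :&: E| =
  \sum_(w in V) #|[set x in ~: V | [set w; x] \in E]|.
Proof.
set S := cross_edges V (~: V) :&: E.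
have step1 : forall w, w \in V ->
  #|[set x in ~: V | [set w; x] \in E]| = #|[set e in S | w \in e]|.
  move=> w wV.
  have -> : [set e in S | w \in e] = (fun x => [set w; x]) @: [set x in ~: V | [set w; x] \in E].
    apply/setP => e; rewrite inE; apply/andP/imsetP.
    - rewrite /S /cross_edges !inE => -[/andP [/andP [e2 /andP [/eqP eV /eqP eX]] eE] we].
      have /cards1P [z Ez] : #|e :&: ~: V| == 1 by rewrite eX.
      have ze : z \in e :&: ~: V by rewrite Ez inE.
      rewrite !inE in ze; case/andP: ze => ze zV.
      have wz : w != z by apply/eqP => E'; rewrite -E' wV in zV.
      have ee : e = [set w; z].
        apply/eqP; rewrite eq_sym eqEcard; apply/andP; split.
          by apply/subsetP => t /set2P [] ->.
        by rewrite cards2 wz (eqP e2).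
      exists z => //; rewrite !inE zV /= -ee //.
    - case=> z; rewrite !inE => /andP [zV zE] ->; rewrite zE !inE eqxx /= andbT.
      have wz : w != z by apply/eqP => E'; rewrite -E' wV in zV.
      rewrite cards2 wz /=.
      have -> : [set w; z] :&: V = [set w].
        apply/setP => t; rewrite !inE; case: eqP => [->|_]; first by rewrite wV.
        by case: eqP => [->|_] /=; [rewrite (negbTE zV) | rewrite ?andbF].
      have -> : [set w; z] :&: ~: V = [set z].
        apply/setP => t; rewrite !inE; case: (eqVneq t z) => [->|tz].
          by rewrite orbT zV.
        by rewrite orbF; case: eqP => [->|//]; rewrite wV.
      by rewrite !cards1.
  rewrite card_in_imset // => a b; rewrite !inE => /andP [aV _] /andP [bV _] Eab.
  have : a \in [set w; b] by rewrite -Eab !inE eqxx orbT.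
  rewrite !inE => /orP [/eqP E'|/eqP //]; by rewrite E' wV in aV.
rewrite (eq_bigr _ step1).
under eq_bigr => w _ do rewrite card_cond.
rewrite exchange_big /= -sum1_card; apply: eq_bigr => e.
rewrite /S /cross_edges !inE => /andP [/andP [_ /andP [/eqP eV _]] _].
rewrite -big_mkcondr /=; transitivity #|e :&: V|; first by rewrite eV.
by rewrite -sum1_card; apply: eq_bigl => t; rewrite !inE andbC.
Qed.
End S.

Lemma fail_le (T : finType) (A N : {set T}) :
  ~ (exists x y, [/\ x != y, x \in A & y \in N]) ->
  #|A| = 0 \/ #|N| = 0 \/ (#|A| <= 1 /\ #|N| <= 1).
Proof.
move=> H.
case: (set_0Vmem A) => [->|[x xA]]; first by left; rewrite cards0.
case: (set_0Vmem N) => [->|[y yN]]; first by right; left; rewrite cards0.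
right; right; split.
  rewrite -(cards1 y); apply: subset_leq_card; apply/subsetP => z zA; rewrite inE.
  by apply/negPn/negP => zy; apply: H; exists z, y.
rewrite -(cards1 x); apply: subset_leq_card; apply/subsetP => z zN; rewrite inE.
by apply/negPn/negP => zx; apply: H; exists x, z; rewrite eq_sym.
Qed.

Lemma comb (T : finType) (X Au Av Cu Cv : {set T}) : 1 < #|X| ->
  Au \subset X :\: Cu -> Av \subset X :\: Cv -> Cu \subset X -> Cv \subset X ->
  #|Cu| + #|Cv| < #|Au| + #|Av| ->
  (exists x y, [/\ x != y, x \in Au & y \in X :\: Cv]) \/
  (exists x y, [/\ x != y, x \in Av & y \in X :\: Cu]).
Proof.
move=> k2 sAu sAv sCu sCv Hlt.
have nu : #|X :\: Cu| + #|Cu| = #|X|.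
  by rewrite cardsD (setIidPr sCu) subnK // subset_leq_card.
have nv : #|X :\: Cv| + #|Cv| = #|X|.
  by rewrite cardsD (setIidPr sCv) subnK // subset_leq_card.
have au := subset_leq_card sAu; have av := subset_leq_card sAv.
case: (classic (exists x y, [/\ x != y, x \in Au & y \in X :\: Cv])); first by left.
case: (classic (exists x y, [/\ x != y, x \in Av & y \in X :\: Cu])); first by right.
move=> /fail_le h2 /fail_le h1; exfalso; lia.
Qed.

Theorem lemma12 (T : finType) (E0 E1 E2 M : {set {set T}}) :
  ordered_partition E0 E1 E2 ->
  is_matching M -> M \subset E0 ->
  #|M| < #|T|./2 ->
  let X := ~: Vm M in
  (induced_edges X :&: (E0 :|: E1) != set0 ->
     exists M' : {set {set T}}, good_matching E1 E2 M' /\ #|M'| = #|M|.+1) /\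
  (#|cross_edges (Vm M) X :&: E0| > #|cross_edges (Vm M) X :&: E2| ->
     exists M' : {set {set T}}, good_matching E1 E2 M' /\ #|M'| = #|M|.+1).
Proof.
move=> HP HM HME HMsz X; split.
  case/set0Pn => e; rewrite !inE => /andP [/andP [e2 eX] eE].
  apply: (@extend1 _ E0 E1 E2 M e HP HM HME); first exact/eqP; first exact: eX.
  by rewrite inE.
have [Mc Md] := matchP HM.
have tM : trivIset M.
  by apply/trivIsetP => A B HA HB Hne; apply/disjP; apply: Md.
have cV : #|Vm M| = (#|M|).*2.
  have := tM; rewrite /trivIset => /eqP <-.
  rewrite (eq_bigr (fun _ => 2)); last by move=> A /Mc.
  by rewrite sum_nat_const muln2.
have k2 : 1 < #|X|.
  have := cardsC (Vm M); rewrite cV -/X; move: HMsz; rewrite gtn_half_double.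
  lia.
rewrite /X !cnt /Vm !(big_trivIset _ tM) => Hlt.
set A := fun w => #|[set x in ~: cover M | [set w; x] \in E0]|.
set C := fun w => #|[set x in ~: cover M | [set w; x] \in E2]|.
have : ~~ [forall m in M, \sum_(w in m) A w <= \sum_(w in m) C w].
  apply/negP => /forall_inP H; move: Hlt; rewrite ltnNge => /negP; apply; exact: leq_sum.
rewrite negb_forall_in => /exists_inP [m mM]; rewrite -ltnNge.
have /cards2P [u [v [uv Em]]] : #|m| == 2 by rewrite Mc.
rewrite Em big_setU1 ?big_set1 ?inE //= big_setU1 ?big_set1 ?inE //= => Hm.
have [_ D01 D02 D12] := HP.
have fin : forall a b, [set a; b] \in M -> a != b ->
  (exists x y, [/\ x != y, x \in [set x in ~: cover M | [set a; x] \in E0]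
     & y \in ~: cover M :\: [set x in ~: cover M | [set b; x] \in E2]]) ->
  exists M' : {set {set T}}, good_matching E1 E2 M' /\ #|M'| = #|M|.+1.
  move=> a b abM ab [x [y [xy]]]; rewrite !inE => /andP [xV xE] /andP [yE yV].
  rewrite yV /= in yE.
  exact: (extend2 HP HM HME abM ab xV yV xy xE yE).
have sub : forall a, [set x in ~: cover M | [set a; x] \in E0] \subset
    ~: cover M :\: [set x in ~: cover M | [set a; x] \in E2].
  move=> a; apply/subsetP => x; rewrite !inE => /andP [xV xE]; rewrite xV /= andbT.
  by apply: (disjPs D02).
have subC : forall a, [set x in ~: cover M | [set a; x] \in E2] \subset ~: cover M.
  by move=> a; apply/subsetP => x; rewrite inE => /andP [].
rewrite Em in mM.
case: (comb k2 (sub u) (sub v) (subC u) (subC v) Hm) => H.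
  exact: fin mM uv H.
apply: (fin v u) => //; last by rewrite eq_sym.
by rewrite setUC.
Qed.
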